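(* Let $k\ge1$, let $u\colon\mathbb Z/2^k\mathbb Z\to\mathbb Z/2^k\mathbb Z$ be a T-function on $k$-bit words that is a single cycle (a cyclic permutation of length $2^k$), let $v\colon\mathbb Z/2^k\mathbb Z\to\{0,1\}$ be such that $\#\{z\in\mathbb Z/2^k\mathbb Z: v(z)=1\}$ is odd, and let $\sigma$ be an odd integer and $\varepsilon$ an even integer. For $x\in\mathbb Z_2$ write uniquely $x=\bar x+2^k\tilde x$ with $\bar x\in\{0,1,\ldots,2^k-1\}$ and $\tilde x\in\mathbb Z_2$, and define $$f(x)=u(\bar x)+2^k\bigl(\tilde x+(\sigma-\varepsilon)v(\bar x)+\varepsilon\bigr),$$ where $u(\bar x)$ is taken in $\{0,\ldots,2^k-1\}$. Then $f$ is a transitive T-function, and for every $x\in\mathbb Z_2$ and every $h\in\mathbb Z_2$ with $h\equiv0\pmod{2^k}$ one has $f(x+h)=f(x)+h$; in particular $f$ is uniformly differentiable modulo $4$ (with derivative $1$) and $N_2(f)\le k$.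
   Context: $\mathbb Z_2$ denotes the ring of 2-adic integers, $\operatorname{ord}_2$ the 2-adic valuation. A T-function is a map $f\colon\mathbb Z_2\to\mathbb Z_2$ with $a\equiv b\pmod{2^s}\Rightarrow f(a)\equiv f(b)\pmod{2^s}$ for all $s$; a T-function on $k$-bit words is a map of $\mathbb Z/2^k\mathbb Z$ with the same compatibility property for $s\le k$. $f$ is transitive if for every $n\ge1$ the reduced map $f\bmod 2^n$ is a single-cycle permutation of $\mathbb Z/2^n\mathbb Z$. $f$ is uniformly differentiable modulo $2^M$ if there exist $f'_M\colon\mathbb Z_2\to\mathbb Z_2$ and $K\in\mathbb N$ such that for all $x$ and all nonzero $h\equiv0\pmod{2^K}$, $f(x+h)\equiv f(x)+f'_M(x)h\pmod{2^{\operatorname{ord}_2h+M}}$; the least such $K$ is $N_M(f)$. *)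

(* Defs.v *)
(* 2-adic integers Z_2 are modelled as binary digit streams
   (x : nat -> bool, digit i has weight 2^i), with the ring operations
   defined through truncations (carry-correct). *)
From mathcomp Require Import all_boot all_algebra.
Unset Printing Implicit Defensive.
Import GRing.Theory Num.Theory.

Definition Z2 := nat -> bool.

Definition trunc (n : nat) (x : Z2) : nat := \sum_(i < n) (x i : nat) * 2 ^ i.

(** The 2-adic integer determined by a coherent family of residues
    r n (r n = the value mod 2^n, not necessarily reduced): digit n is
    the n-th binary digit of r (n+1). *)
Definition mkZ2 (r : nat -> nat) : Z2 := fun n => odd (r n.+1 %/ 2 ^ n).

Definition z2zero : Z2 := fun _ => false.
Definition z2one : Z2 := fun n => n == 0.
Definition z2add (x y : Z2) : Z2 := mkZ2 (fun n => trunc n x + trunc n y).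
Definition z2mul (x y : Z2) : Z2 := mkZ2 (fun n => trunc n x * trunc n y).
Definition z2opp (x : Z2) : Z2 := mkZ2 (fun n => 2 ^ n - trunc n x).
Definition z2_of_nat (m : nat) : Z2 := mkZ2 (fun n => m).
Definition z2_of_int (z : int) : Z2 :=
  mkZ2 (fun n => `|(z %% (2 ^ n)%:Z)%Z|%N).

Definition z2cong (s : nat) (a b : Z2) : Prop := trunc s a = trunc s b.

Definition is_ord2 (h : Z2) (n : nat) : Prop :=
  h n /\ (forall i, i < n -> h i = false).

Definition Tfun (f : Z2 -> Z2) : Prop :=
  forall (s : nat) (a b : Z2), z2cong s a b -> z2cong s (f a) (f b).

Lemma trunc_mod_lt (n : nat) (x : Z2) : trunc n x %% 2 ^ n < 2 ^ n.
Proof. by rewrite ltn_pmod // expn_gt0. Qed.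

Definition truncO (n : nat) (x : Z2) : 'I_(2 ^ n) := Ordinal (trunc_mod_lt n x).

(** the reduced map f mod 2^n on Z/2^nZ (well defined for T-functions) *)
Definition fred (n : nat) (f : Z2 -> Z2) : 'I_(2 ^ n) -> 'I_(2 ^ n) :=
  fun r => truncO n (f (z2_of_nat r)).

Definition single_cycle {T : finType} (g : T -> T) : Prop :=
  injective g /\ forall x y : T, fconnect g x y.

Definition transitive_T (f : Z2 -> Z2) : Prop :=
  forall n : nat, 0 < n -> single_cycle (fred n f).

Definition Tfun_word (k : nat) (u : 'I_(2 ^ k) -> 'I_(2 ^ k)) : Prop :=
  forall (s : nat) (a b : 'I_(2 ^ k)), s <= k ->
    a %% 2 ^ s = b %% 2 ^ s -> u a %% 2 ^ s = u b %% 2 ^ s.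

Definition unif_diff_with (M : nat) (f f' : Z2 -> Z2) (K : nat) : Prop :=
  forall (x h : Z2) (n : nat), is_ord2 h n -> trunc K h = 0 ->
    z2cong (n + M) (f (z2add x h)) (z2add (f x) (z2mul (f' x) h)).

Definition unif_differentiable (M : nat) (f : Z2 -> Z2) : Prop :=
  exists f' K, unif_diff_with M f f' K.

Definition is_N (M : nat) (f : Z2 -> Z2) (K : nat) : Prop :=
  (exists f', unif_diff_with M f f' K) /\
  (forall K', (exists f', unif_diff_with M f f' K') -> K <= K').

Definition xtilde (k : nat) (x : Z2) : Z2 := fun n => x (n + k).

Definition fdef (k : nat) (u : 'I_(2 ^ k) -> 'I_(2 ^ k))
    (v : 'I_(2 ^ k) -> bool) (sigma eps : int) (x : Z2) : Z2 :=
  let xb := truncO k x in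
  z2add (z2_of_nat (u xb))
    (z2mul (z2_of_nat (2 ^ k))
       (z2add (xtilde k x)
          (z2_of_int (((sigma - eps) * (v xb)%:Z + eps)%R)))).

(* Main.v *)
Require Import Defs.
From mathcomp Require Import all_boot all_algebra zify ring.
From Stdlib Require Import FunctionalExtensionality Classical.
Import GRing.Theory Num.Theory.
Lemma trunc0 x : trunc 0 x = 0.
Proof. by rewrite /trunc big_ord0. Qed.

Lemma truncS n x : trunc n.+1 x = trunc n x + x n * 2 ^ n.
Proof. by rewrite /trunc big_ord_recr. Qed.

Lemma trunc_lt n x : trunc n x < 2 ^ n.
Proof.
elim: n => [|n IH]; first by rewrite trunc0.
rewrite truncS expnS; case: (x n) => /=; lia.
Qed.

Lemma exp2_split {m n} : m <= n -> 2 ^ n = 2 ^ (n - m) * 2 ^ m.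
Proof. by move=> h; rewrite -expnD subnK. Qed.

Lemma trunc_mod m n x : m <= n -> trunc m x = trunc n x %% 2 ^ m.
Proof.
elim: n => [|n IH]; first by rewrite leqn0 => /eqP ->; rewrite trunc0.
rewrite leq_eqVlt => /orP [/eqP ->|]; first by rewrite modn_small // trunc_lt.
rewrite ltnS => lemn; rewrite (IH lemn) truncS.
move=> {IH}; case: (x n) => /=; last by rewrite mul0n addn0.
by rewrite mul1n (exp2_split lemn) addnC modnMDl.
Qed.

Lemma mod_step R n : R %% 2 ^ n.+1 = R %% 2 ^ n + odd (R %/ 2 ^ n) * 2 ^ n.
Proof.
have p0 : 0 < 2 ^ n by rewrite expn_gt0.
rewrite {1}(divn_eq R (2 ^ n)).
set q := R %/ 2 ^ n; set r := R %% 2 ^ n.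
have rlt : r < 2 ^ n by rewrite ltn_pmod.
rewrite {1}(divn_eq q 2) -modn2 -/q.
have -> : (q %/ 2 * 2 + q %% 2) * 2 ^ n + r = q %/ 2 * 2 ^ n.+1 + (r + q %% 2 * 2 ^ n).
  by rewrite expnS; ring.
rewrite modnMDl modn_small //.
have : q %% 2 < 2 by rewrite ltn_pmod.
rewrite expnS; nia.
Qed.

Lemma bits R n : \sum_(i < n) (odd (R %/ 2 ^ i) : nat) * 2 ^ i = R %% 2 ^ n.
Proof.
elim: n => [|n IH]; first by rewrite big_ord0 expn0 modn1.
by rewrite big_ord_recr /= IH mod_step.
Qed.

Lemma odd_div_mod a b i : a = b %[mod 2 ^ i.+1] -> odd (a %/ 2 ^ i) = odd (b %/ 2 ^ i).
Proof.
move=> h.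
have H : (a %/ 2 ^ i) %% 2 = (b %/ 2 ^ i) %% 2 by rewrite !modn_divl -expnS h.
rewrite !modn2 in H; by case: (odd (a %/ _)) H; case: (odd (b %/ _)).
Qed.

Lemma trunc_mkZ2 r n : (forall i, i < n -> r i.+1 = r n %[mod 2 ^ i.+1]) ->
  trunc n (mkZ2 r) = r n %% 2 ^ n.
Proof.
move=> H; rewrite -bits /trunc /mkZ2; apply: eq_bigr => i _.
by rewrite (odd_div_mod _ _ _ (H i (ltn_ord i))).
Qed.

Lemma trunc_add n x y : trunc n (z2add x y) = (trunc n x + trunc n y) %% 2 ^ n.
Proof.
apply: trunc_mkZ2 => i lt_in.
by rewrite (trunc_mod _ _ x lt_in) (trunc_mod _ _ y lt_in) modnDm.
Qed.

Lemma trunc_mul n x y : trunc n (z2mul x y) = (trunc n x * trunc n y) %% 2 ^ n.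
Proof.
apply: trunc_mkZ2 => i lt_in.
by rewrite (trunc_mod _ _ x lt_in) (trunc_mod _ _ y lt_in) modnMm.
Qed.

Lemma trunc_nat n m : trunc n (z2_of_nat m) = m %% 2 ^ n.
Proof. by apply: trunc_mkZ2. Qed.

Lemma trunc_ext x y : (forall n, trunc n x = trunc n y) -> x = y.
Proof.
move=> H; apply: functional_extensionality => n.
have := H n.+1; rewrite !truncS H => /eqP; rewrite eqn_add2l => /eqP.
have p0 : 0 < 2 ^ n by rewrite expn_gt0.
by case: (x n); case: (y n) => //=; rewrite ?mul1n ?mul0n => E; rewrite E ltnn in p0 || rewrite -E ltnn in p0.
Qed.

Lemma trunc_one_mul n h : trunc n (z2mul z2one h) = trunc n h.
Proof.
rewrite trunc_mul; case: n => [|n]; first by rewrite !trunc0.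
have -> : trunc n.+1 z2one = 1.
  rewrite /trunc big_ord_recl /= big1 // => i _; by rewrite /z2one /=.
by rewrite mul1n modn_small // trunc_lt.
Qed.

Lemma trunc_split k n y :
  trunc (n + k) y = trunc k y + 2 ^ k * trunc n (xtilde k y).
Proof.
elim: n => [|n IH]; first by rewrite trunc0 muln0 addn0.
by rewrite addSn truncS IH truncS /xtilde expnD; ring.
Qed.

Lemma modsplit k n a B : a < 2 ^ k ->
  (a + 2 ^ k * B) %% 2 ^ (n + k) = a + 2 ^ k * (B %% 2 ^ n).
Proof.
move=> alt; rewrite {1}(divn_eq B (2 ^ n)).
have -> : a + 2 ^ k * (B %/ 2 ^ n * 2 ^ n + B %% 2 ^ n) =
  B %/ 2 ^ n * 2 ^ (n + k) + (a + 2 ^ k * (B %% 2 ^ n)) by rewrite expnD; ring.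
rewrite modnMDl modn_small //.
have : B %% 2 ^ n < 2 ^ n by rewrite ltn_pmod // expn_gt0.
rewrite expnD; nia.
Qed.

Lemma split_uniq {k a a' B B'} : a < 2 ^ k -> a' < 2 ^ k ->
  a + 2 ^ k * B = a' + 2 ^ k * B' -> a = a' /\ B = B'.
Proof.
move=> ha ha' E.
have p0 : 0 < 2 ^ k by rewrite expn_gt0.
have E1 := congr1 (fun t => t %% 2 ^ k) E.
have E2 := congr1 (fun t => t %/ 2 ^ k) E.
move: E1 E2 => /=; rewrite ![_ + 2 ^ k * _]addnC ![2 ^ k * _]mulnC.
rewrite !modnMDl !divnMDl // !modn_small // !divn_small // !addn0.
by move=> -> ->.
Qed.

Definition hi k n y := trunc n (xtilde k y).

Lemma hi_lt k n y : hi k n y < 2 ^ n.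
Proof. exact: trunc_lt. Qed.

Lemma hi_of k n y a B : a < 2 ^ k -> B < 2 ^ n ->
  trunc (n + k) y = a + 2 ^ k * B -> trunc k y = a /\ hi k n y = B.
Proof.
move=> ha hB; rewrite trunc_split => E.
exact: (@split_uniq k _ _ _ _ (trunc_lt k y) ha E).
Qed.

Lemma eq_split k y1 y2 : trunc k y1 = trunc k y2 ->
  (forall n, hi k n y1 = hi k n y2) -> y1 = y2.
Proof.
move=> E1 E2; apply: trunc_ext => n.
rewrite (trunc_mod n (n + k) y1 (leq_addr _ _)) (trunc_mod n (n + k) y2 (leq_addr _ _)).
by rewrite !trunc_split E1 -/(hi k n y1) -/(hi k n y2) E2.
Qed.

Lemma hi_add k n x h : trunc k h = 0 ->
  trunc k (z2add x h) = trunc k x /\ hi k n (z2add x h) = (hi k n x + hi k n h) %% 2 ^ n.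
Proof.
move=> h0; apply: hi_of; first exact: trunc_lt.
  by rewrite ltn_pmod // expn_gt0.
rewrite trunc_add !trunc_split h0 add0n -addnA -mulnDr modsplit //; exact: trunc_lt.
Qed.

Section F.
Variables (k : nat) (u : 'I_(2 ^ k) -> 'I_(2 ^ k)) (v : 'I_(2 ^ k) -> bool)
  (sigma eps : int).

Local Notation f := (fdef k u v sigma eps).
Definition cc (b : bool) : int := (((sigma - eps) * (b : nat)%:Z + eps)%R).
Definition W n b := trunc n (z2_of_int (cc b)).

Lemma trunc_f n y : trunc n (f y) =
  (u (truncO k y) + 2 ^ k * (hi k n y + W n (v (truncO k y)))) %% 2 ^ n.
Proof.
rewrite /fdef trunc_add trunc_nat trunc_mul trunc_nat trunc_add /hi /W /cc.
by rewrite modnDml modnDmr -modnDmr modnMml modnMmr modnDmr.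
Qed.

Lemma truncO_val y : (truncO k y : nat) = trunc k y.
Proof. by rewrite /= modn_small // trunc_lt. Qed.

Lemma f_low_hi n y : trunc k (f y) = u (truncO k y) /\ hi k n (f y) = (hi k n y + W n (v (truncO k y))) %% 2 ^ n.
Proof.
apply: hi_of; [exact: ltn_ord | by rewrite ltn_pmod // expn_gt0 |].
rewrite trunc_f modsplit; last exact: ltn_ord.
congr (_ + 2 ^ k * _).
rewrite /hi /W (trunc_mod n (n + k) (xtilde k y) (leq_addr _ _)).
by rewrite (trunc_mod n (n + k) (z2_of_int _) (leq_addr _ _)) modnDm.
Qed.

Lemma truncO_f y : truncO k (f y) = u (truncO k y).
Proof. apply: val_inj; rewrite /= (f_low_hi 0 y).1 modn_small //; exact: ltn_ord. Qed.

Lemma hi_f n y : hi k n (f y) = (hi k n y + W n (v (truncO k y))) %% 2 ^ n.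
Proof. exact: (f_low_hi n y).2. Qed.

Lemma iter_truncO m y : truncO k (iter m f y) = iter m u (truncO k y).
Proof. by elim: m => //= m IH; rewrite truncO_f IH. Qed.

Lemma iter_hi n m y : hi k n (iter m f y) =
  (hi k n y + \sum_(j < m) W n (v (iter j u (truncO k y)))) %% 2 ^ n.
Proof.
elim: m => [|m IH]; first by rewrite big_ord0 addn0 modn_small // hi_lt.
by rewrite iterS hi_f IH iter_truncO big_ord_recr /= modnDml addnA.
Qed.

Lemma truncO_eq {a b} : trunc k a = trunc k b -> truncO k a = truncO k b.
Proof. by move=> E; apply: val_inj; rewrite /= E. Qed.

Lemma f_Tfun : Tfun_word k u -> Tfun f.
Proof.
move=> Hw s a b; rewrite /z2cong => E.
case: (leqP s k) => [sk|ks].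
  rewrite (trunc_mod s k (f a) sk) (trunc_mod s k (f b) sk).
  rewrite (f_low_hi 0 a).1 (f_low_hi 0 b).1; apply: Hw => //.
  by rewrite !truncO_val -!trunc_mod.
move: E; have [s' ->] : exists s', s = s' + k by exists (s - k); rewrite subnK // ltnW.
rewrite !trunc_split => E.
have [E1 E2] := split_uniq (trunc_lt _ _) (trunc_lt _ _) E.
have E3 := truncO_eq E1.
by rewrite -/(hi k s' (f a)) -/(hi k s' (f b)) !hi_f (f_low_hi 0 a).1 (f_low_hi 0 b).1 E3 /hi E2.
Qed.

Lemma f_shift x h : trunc k h = 0 -> f (z2add x h) = z2add (f x) h.
Proof.
move=> h0; apply: (eq_split k).
  rewrite (hi_add k 0 (f x) h h0).1 (f_low_hi 0 _).1 (f_low_hi 0 x).1.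
  by rewrite (truncO_eq (hi_add k 0 x h h0).1).
move=> n; rewrite (hi_add k n (f x) h h0).2 !hi_f (hi_add k n x h h0).2.
rewrite (truncO_eq (hi_add k 0 x h h0).1) !modnDml; congr (_ %% _); ring.
Qed.
End F.

Lemma odd_trunc n x : 0 < n -> odd (trunc n x) = x 0.
Proof.
move=> n0; have := trunc_mod 1 n x n0; rewrite truncS trunc0 /= modn2.
by case: (x 0); case: (odd _).
Qed.

Lemma odd_z2int n (c : int) : 0 < n -> odd (trunc n (z2_of_int c)) = odd `|(c %% 2)%Z|%N.
Proof.
move=> n0; rewrite odd_trunc // /z2_of_int /mkZ2 expn0 divn1 expn1 //.
Qed.

Lemma mod2_odd (s : int) : ~~ (2 %| s)%Z -> `|(s %% 2)%Z|%N = 1.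
Proof.
move=> h.
have h0 : (0 <= (s %% 2)%Z)%R by apply: modz_ge0.
have h1 : ((s %% 2)%Z < 2)%R by apply: ltz_pmod.
have h2 : ((s %% 2)%Z != 0)%R by apply: contra h => /eqP H; apply/dvdz_mod0P.
lia.
Qed.
Lemma mod2_even (s : int) : (2 %| s)%Z -> `|(s %% 2)%Z|%N = 0.
Proof. by move/dvdz_mod0P ->. Qed.

Section Cyc.
Variables (T : finType) (g : T -> T).
Hypothesis Hc : single_cycle g.

Lemma orbit_perm z : perm_eq (orbit g z) (enum T).
Proof.
apply: uniq_perm; [exact: orbit_uniq | exact: enum_uniq |].
by move=> y; rewrite -fconnect_orbit mem_enum Hc.2.
Qed.

Lemma cycle_order z : order g z = #|T|.
Proof. by rewrite -size_orbit (perm_size (orbit_perm z)) cardE. Qed.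

Lemma cycle_iter z : iter #|T| g z = z.
Proof. by rewrite -(cycle_order z) iter_order //; exact: Hc.1. Qed.

Lemma traject_sum (F : T -> nat) N z :
  \sum_(j < N) F (iter j g z) = \sum_(t <- traject g z N) F t.
Proof.
elim: N z => [|N IH] z; first by rewrite big_ord0 big_nil.
by rewrite big_ord_recl trajectS big_cons /= -IH; congr (_ + _); apply: eq_bigr => i _; rewrite -iterSr.
Qed.

Lemma cycle_sum (F : T -> nat) z : \sum_(j < #|T|) F (iter j g z) = \sum_t F t.
Proof.
rewrite traject_sum -(cycle_order z) -/(orbit g z) (perm_big _ (orbit_perm z)).
by rewrite big_enum.
Qed.
End Cyc.

Lemma conn_inj (T : finType) (g : T -> T) : (forall x y, fconnect g x y) -> injective g.
Proof.
move=> H.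
have surj : forall y, y \in codom g.
  move=> y.
  case: (pickP (fun x => x != y)) => [x xy|none].
    have := iter_findex (H x y); case: (findex g x y) => [|m] /=.
      by move=> E; rewrite E eqxx in xy.
    by move=> <-; apply: codom_f.
  have := none (g y); rewrite /= => /negbFE/eqP E.
  by rewrite -{1}E codom_f.
have := @image_injP _ _ g T; rewrite eqn_leq leq_image_card /=.
have -> : #|T| <= #|image g T|.
  by apply: subset_leq_card; apply/subsetP => y _; apply: surj.
by move=> /(_ isT) => /= Hi x y; apply: Hi.
Qed.

Lemma mod_cancel_odd n D a b : odd D -> a * D = b * D %[mod 2 ^ n] -> a = b %[mod 2 ^ n].
Proof.
move=> oD.
have cop : coprime (2 ^ n) D.
  by rewrite coprime_sym; apply: coprimeXr; rewrite coprimen2.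
wlog le_ba : a b / b <= a.
  move=> W E; case: (leqP b a) => [|/ltnW] h; first exact: W.
  by apply/esym/W.
move=> /eqP E; apply/eqP; move: E.
rewrite !eqn_mod_dvd ?leq_mul2r ?le_ba ?orbT // -mulnBl Gauss_dvdl //.
Qed.

Lemma solve_lin n D h t : odd D -> exists j, (h + j * D) %% 2 ^ n = t %% 2 ^ n.
Proof.
move=> oD; have P0 : 0 < 2 ^ n by rewrite expn_gt0.
pose phi (j : 'I_(2 ^ n)) : 'I_(2 ^ n) := Ordinal (ltn_pmod (h + j * D) P0).
have inj : injective phi.
  move=> j1 j2 /(congr1 val) /= E.
  apply: val_inj => /=.
  have : j1 = j2 %[mod 2 ^ n].
    by apply: (@mod_cancel_odd n D _ _ oD); apply/eqP; rewrite -(eqn_modDl h); apply/eqP.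
  by rewrite !modn_small.
have := injF_onto inj (Ordinal (ltn_pmod t P0)).
by case/codomP => j /(congr1 val) /= E; exists j; rewrite E.
Qed.

Lemma cycle_sum' (T : finType) (g : T -> T) (Hc : single_cycle g) (F : T -> nat) z N :
  N = #|T| -> \sum_(j < N) F (iter j g z) = \sum_t F t.
Proof. by move=> ->; apply: cycle_sum. Qed.

Lemma min_ex (P : nat -> Prop) : forall N, P N ->
  exists K, (P K /\ forall K', P K' -> K <= K') /\ K <= N.
Proof.
elim/ltn_ind => N IH PN.
case: (classic (exists K', P K' /\ K' < N)) => [[K' [PK' lt]]|no].
  have [K [H1 H2]] := IH K' lt PK'; exists K; split => //; lia.
exists N; split; [split => //|by []]; move=> K' PK'; rewrite leqNgt; apply/negP => lt; apply: no; exists K'; split => //.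

Qed.

Section Main.
Variables (k : nat) (u : 'I_(2 ^ k) -> 'I_(2 ^ k)) (v : 'I_(2 ^ k) -> bool)
  (sigma eps : int).
Hypothesis Hw : Tfun_word k u.
Hypothesis Hc : single_cycle u.
Hypothesis Hv : odd #|[set z : 'I_(2 ^ k) | v z]|.
Hypothesis Hs : ~~ (2 %| sigma)%Z.
Hypothesis He : (2 %| eps)%Z.

Local Notation f := (fdef k u v sigma eps).

Lemma W_odd n b : 0 < n -> odd (W sigma eps n b) = b.
Proof.
move=> n0; rewrite /W odd_z2int //; case: b; rewrite /cc /=.
  by rewrite mulr1 subrK mod2_odd.
by rewrite mulr0 add0r mod2_even.
Qed.

Lemma D_odd n z : 0 < n -> odd (\sum_(j < 2 ^ k) W sigma eps n (v (iter j u z))).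
Proof.
move=> n0; rewrite (cycle_sum' _ _ Hc (fun t => W sigma eps n (v t)) z _ (esym (card_ord _))).
rewrite (big_morph odd oddD (erefl (odd 0))).
under eq_bigr => t _ do rewrite W_odd //.
move: Hv; rewrite -sum1_card big_mkcond /=.
rewrite (big_morph odd oddD (erefl (odd 0))).
congr (_ = _) => //; apply: eq_bigr => t _; rewrite inE; by case: (v t).
Qed.

Lemma block n z y j : truncO k y = z ->
  truncO k (iter (j * 2 ^ k) f y) = z /\
  hi k n (iter (j * 2 ^ k) f y) =
    (hi k n y + j * \sum_(i < 2 ^ k) W sigma eps n (v (iter i u z))) %% 2 ^ n.
Proof.
move=> Ez; elim: j => [|j [IH1 IH2]].
  by rewrite mul0n /= Ez addn0 modn_small // hi_lt.
rewrite mulSn iterD; split.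
  by rewrite iter_truncO IH1; have := cycle_iter _ _ Hc z; rewrite card_ord.
rewrite iter_hi IH1 IH2 modnDml -addnA.
congr (_ %% _); rewrite mulSn; ring.
Qed.


Lemma conn n a b : exists m, trunc n (iter m f a) = trunc n b.
Proof.
case: n => [|n]; first by exists 0; rewrite !trunc0.
have [m1 E1] : exists m1, iter m1 u (truncO k a) = truncO k b.
  by exists (findex u (truncO k a) (truncO k b)); apply: iter_findex; apply: Hc.2.
set a' := iter m1 f a.
have Ea' : truncO k a' = truncO k b by rewrite iter_truncO.
set z := truncO k b in Ea' *.
have oD := D_odd n.+1 z (ltn0Sn n).
have [j Ej] := solve_lin n.+1 _ (hi k n.+1 a') (hi k n.+1 b) oD.
have [B1 B2] := block n.+1 z a' j Ea'.
exists (j * 2 ^ k + m1); rewrite iterD -/a'.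
rewrite (trunc_mod n.+1 (n.+1 + k) _ (leq_addr _ _)).
rewrite (trunc_mod n.+1 (n.+1 + k) b (leq_addr _ _)) !trunc_split.
rewrite -/(hi k n.+1 _) -/(hi k n.+1 b) B2 Ej (modn_small (hi_lt _ _ _)).
rewrite -!truncO_val B1 //.
Qed.

Lemma truncO_nat n (r : 'I_(2 ^ n)) : truncO n (z2_of_nat r) = r.
Proof. by apply: val_inj; rewrite /= trunc_nat !modn_small. Qed.

Lemma fred_truncO n y : fred n f (truncO n y) = truncO n (f y).
Proof.
rewrite /fred; apply: truncO_eq; apply: (f_Tfun _ _ _ _ _ Hw).
by rewrite /z2cong trunc_nat /= !modn_small // trunc_lt.
Qed.

Lemma iter_fred n m y : iter m (fred n f) (truncO n y) = truncO n (iter m f y).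
Proof. by elim: m => //= m ->; rewrite fred_truncO. Qed.

Lemma f_transitive : transitive_T f.
Proof.
move=> n _.
have C : forall r1 r2, fconnect (fred n f) r1 r2.
  move=> r1 r2; rewrite -(truncO_nat _ r1) -(truncO_nat _ r2).
  have [m Em] := conn n (z2_of_nat r1) (z2_of_nat r2).
  by rewrite -(truncO_eq _ Em) -iter_fred; apply: fconnect_iter.
by split => //; apply: conn_inj.
Qed.
End Main.

Theorem mainTheorem3 (k : nat) (u : 'I_(2 ^ k) -> 'I_(2 ^ k))
    (v : 'I_(2 ^ k) -> bool) (sigma eps : int) :
  0 < k ->
  Tfun_word k u ->
  single_cycle u ->
  odd #|[set z : 'I_(2 ^ k) | v z]| ->
  ~~ (2 %| sigma)%Z ->
  (2 %| eps)%Z ->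
  let f := fdef k u v sigma eps in
  [/\ Tfun f, transitive_T f,
      (forall x h : Z2, trunc k h = 0 -> f (z2add x h) = z2add (f x) h),
      unif_diff_with 2 f (fun _ => z2one) k &
      exists K, is_N 2 f K /\ K <= k].
Proof.
move=> k0 Hw Hc Hv Hs He f.
have UD : unif_diff_with 2 f (fun _ => z2one) k.
  move=> x h n _ h0; rewrite /f f_shift // /z2cong !trunc_add trunc_one_mul //.
split.
- exact: f_Tfun.
- exact: f_transitive.
- by move=> x h h0; rewrite /f f_shift.
- exact: UD.
- have [K [[H1 H2] H3]] := min_ex (fun K => exists f', unif_diff_with 2 f f' K) k
    (ex_intro (fun g => unif_diff_with 2 f g k) _ UD).
  by exists K; split => //; split.
Qed.
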